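(* Let $G$ be a two-legged one-particle-irreducible graph with two distinct external vertices $v_1$ and $v_2$, and suppose every vertex of $G$ has even incidence number. Let $T$ be any spanning tree of $G$, and let $\theta$ be the linear subtree of $T$ consisting of the unique path from $v_1$ to $v_2$ along lines of $T$. Then for every line $\ell\in\theta$ there are two distinct lines $\ell_1,\ell_2$ of $G$, not in $T$, such that $\ell$ lies on the loop generated by $\ell_1$ and on the loop generated by $\ell_2$ (so these two loops overlap on $\ell$), and for each $i\in\{1,2\}$ the graph $T_i$ obtained from $T$ by removing $\ell$ and adding $\ell_i$ is a spanning tree of $G$.
   Context: A graph here consists of vertices, internal lines (edges joining two vertices; multiple lines between the same pair of vertices and lines from a vertex to itself are allowed) and external legs (half-lines attached to a single vertex). It is two-legged if it has exactly two external legs; the vertices to which the external legs are attached are called external vertices. The incidence number of a vertex is the number of line ends (internal line ends and external legs) at that vertex. A graph is one-particle-irreducible (1PI) if it is connected and remains connected after cutting any single internal line. A spanning tree is a subgraph consisting of internal lines that is a tree containing all vertices. For a spanning tree $T$ and an internal line $\ell'\notin T$, the loop generated by $\ell'$ is the unique cycle in $T\cup\{\ell'\}$, i.e. $\ell'$ together with the path in $T$ joining its endpoints. *)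

(* Defs.v *)
(* A graph: finite vertex type V, finite type L of internal
   lines, each line l joining the (unordered) endpoints src l and tgt l
   (multiple lines and self-loops allowed). The two external legs are
   attached at vertices v1 and v2. *)
From mathcomp Require Import all_boot.
Set Implicit Arguments. Unset Strict Implicit. Unset Printing Implicit Defensive.

Section Graphs.
Variables (V L : finType) (src tgt : L -> V).

Definition joins (l : L) (a b : V) : bool :=
  ((src l == a) && (tgt l == b)) || ((src l == b) && (tgt l == a)).

Definition adj (S : {set L}) : rel V :=
  fun a b => [exists l in S, joins l a b].

Definition connected_by (S : {set L}) : Prop :=
  forall a b : V, connect (adj S) a b.

(* incidence number of v: number of line ends at v (a self-loop counts twice)
   plus the number of external legs at v *)
Definition incidence (v1 v2 : V) (v : V) : nat :=
  #|[set l | src l == v]| + #|[set l | tgt l == v]| + (v == v1) + (v == v2).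

Definition one_PI : Prop :=
  connected_by setT /\ forall l : L, connected_by (setT :\ l).

(* ls is a cycle with lines in S: a nonempty closed walk through pairwise
   distinct lines and pairwise distinct vertices vs, the i-th line joining
   vs_i and vs_(i+1 mod n) (the defaults dl, dv of nth are irrelevant) *)
Definition is_cycle (S : {set L}) (ls : seq L) : Prop :=
  exists vs : seq V,
    [/\ ls != [::], size vs = size ls, uniq ls && uniq vs,
        all (fun l => l \in S) ls &
        forall (i : nat) (dl : L) (dv : V), i < size ls ->
          joins (nth dl ls i) (nth dv vs i) (nth dv vs ((i.+1) %% size ls))].

Definition acyclic (S : {set L}) : Prop := forall ls, ~ is_cycle S ls.

Definition spanning_tree (T : {set L}) : Prop := connected_by T /\ acyclic T.

Definition is_path (S : {set L}) (a b : V) (ls : seq L) : Prop :=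
  exists vs : seq V,
    [/\ size vs = (size ls).+1, head a vs = a /\ last a vs = b, uniq vs,
        all (fun l => l \in S) ls &
        forall (i : nat) (dl : L), i < size ls ->
          joins (nth dl ls i) (nth a vs i) (nth a vs i.+1)].

Definition on_loop (T : {set L}) (l' l : L) : Prop :=
  exists ls, [/\ is_cycle (T :|: [set l']) ls, l' \in ls & l \in ls].

End Graphs.

(* Main.v *)
Require Import Defs.
From mathcomp Require Import all_boot zify.
Set Implicit Arguments. Unset Strict Implicit. Unset Printing Implicit Defensive.

Section Aux.
Variables (V L : finType) (src tgt : L -> V).
Local Notation joins := (joins src tgt).
Local Notation adj := (adj src tgt).

Definition cross (c : pred V) (m : L) := c (src m) != c (tgt m).

Lemma joins_self m : joins m (src m) (tgt m).
Proof. by rewrite /Defs.joins !eqxx. Qed.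

Lemma joins_sym m u w : joins m u w = joins m w u.
Proof. by rewrite /Defs.joins orbC. Qed.

Lemma joins_eq (c : pred V) m u w : joins m u w -> c (src m) = c (tgt m) -> c u = c w.
Proof. by rewrite /Defs.joins => /orP[]/andP[/eqP<- /eqP<-]. Qed.

Lemma joins_cross (c : pred V) m u w : joins m u w -> c u != c w -> cross c m.
Proof. rewrite /cross => /orP[]/andP[/eqP<- /eqP<-] //; by rewrite eq_sym. Qed.

Lemma adj_sym (S : {set L}) : symmetric (adj S).
Proof.
move=> a b; apply/existsP/existsP => -[m /andP[mS j]]; exists m;
  by rewrite mS joins_sym.
Qed.

Lemma connect_symS (S : {set L}) : connect_sym (adj S).
Proof. exact/sym_connect_sym/adj_sym. Qed.

Lemma adj_sub (S S' : {set L}) a b : S \subset S' -> adj S a b -> adj S' a b.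
Proof.
move=> /subsetP sub /existsP[m /andP[mS j]]; apply/existsP; exists m.
by rewrite j (sub _ mS).
Qed.

Lemma connect_subS (S S' : {set L}) a b : S \subset S' -> connect (adj S) a b -> connect (adj S') a b.
Proof.
move=> sub; apply: connect_sub => x y h; apply: connect1; exact: adj_sub h.
Qed.

Lemma joins_in m u w : joins m u w -> adj [set m] u w.
Proof. by move=> j; apply/existsP; exists m; rewrite in_set1 eqxx j. Qed.

Lemma is_cycle_sub (S S' : {set L}) ls : S \subset S' -> is_cycle src tgt S ls -> is_cycle src tgt S' ls.
Proof.
move=> /subsetP sub [vs [h1 h2 h3 h4 h5]]; exists vs; split => //.
apply/allP => x xl; apply: sub; exact: (allP h4).
Qed.

Lemma joins_idx (vs : seq V) dv m i j : uniq vs -> i.+1 < size vs -> j.+1 < size vs ->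
  joins m (nth dv vs i) (nth dv vs i.+1) -> joins m (nth dv vs j) (nth dv vs j.+1) -> i = j.
Proof.
move=> u hi hj.
have E : forall p q, p < size vs -> q < size vs -> nth dv vs p = nth dv vs q -> p = q.
  by move=> p q hp hq e; apply/eqP; rewrite -(nth_uniq dv hp hq u) e.
rewrite /Defs.joins => /orP[]/andP[/eqP e1 /eqP e2] /orP[]/andP[/eqP e3 /eqP e4].
- apply: E; [lia|lia|by rewrite -e1 -e3].
- have := E i j.+1 ltac:(lia) ltac:(lia) (etrans (esym e1) e3).
  have := E i.+1 j ltac:(lia) ltac:(lia) (etrans (esym e2) e4). lia.
- have := E i.+1 j ltac:(lia) ltac:(lia) (etrans (esym e1) e3).
  have := E i j.+1 ltac:(lia) ltac:(lia) (etrans (esym e2) e4). lia.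
- apply: E; [lia|lia|by rewrite -e2 -e4].
Qed.

Lemma cross_step (e : rel V) (c : pred V) x y : connect e x y -> c x -> ~~ c y ->
  exists u w, [/\ e u w, c u & ~~ c w].
Proof.
move=> /connectP[p pp ->]; elim: p x pp => [|z p IH] x /=; first by move=> _ ->.
move=> /andP[exz pp] cx cl; case cz: (c z); first exact: IH cz cl.
by exists x, z; rewrite exz cx cz.
Qed.

Lemma cycle_class (c : pred V) n (f : nat -> V) k : k < n ->
  (forall i, i < n -> i != k -> c (f i) = c (f (i.+1 %% n))) ->
  c (f k) = c (f (k.+1 %% n)).
Proof.
move=> kn H.
pose h i := c (f (i %% n)).
have step i : i < n -> i != k -> h i = h i.+1.
  by move=> hi hk; rewrite /h (modn_small hi) H.
have low i : i <= k -> h i = h 0.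
  elim: i => // i IH hi; rewrite -IH; last lia.
  by symmetry; apply: step; lia.
have high d : k + d < n -> h (n - d) = h n.
  elim: d => [|d IH] hd; first by rewrite subn0.
  rewrite -IH; last lia.
  have -> : n - d = (n - d.+1).+1 by lia.
  by apply: step; lia.
have hk : h k = c (f k) by rewrite /h modn_small.
rewrite -hk low // -[X in _ = c (f X)]/(k.+1 %% n) -/(h k.+1).
have -> : k.+1 = n - (n - k.+1) by lia.
rewrite high; last lia.
by rewrite /h modnn mod0n.
Qed.


Section Pick.
Variables (S : {set L}) (x : L).
Definition pk u w := odflt x [pick m in S | joins m u w].

Lemma pk_ok u w : adj S u w -> (pk u w \in S) && joins (pk u w) u w.
Proof.
move=> /existsP[m hm]; rewrite /pk; case: pickP => [m' /= -> //|/(_ m)].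
by rewrite hm.
Qed.

Lemma pm_all a s : path (adj S) a s -> all (mem S) (pairmap pk a s).
Proof.
elim: s a => //= y s IH a /andP[h p]; rewrite IH // andbT.
by case/andP: (pk_ok h).
Qed.

Lemma pm_nth a s i dl dv : path (adj S) a s -> i < size s ->
  joins (nth dl (pairmap pk a s) i) (nth dv (a :: s) i) (nth dv (a :: s) i.+1).
Proof.
elim: s a i => //= y s IH a [|i] /andP[h p] hi /=.
  by case/andP: (pk_ok h).
exact: IH.
Qed.

Lemma pm_mem a s m : path (adj S) a s -> m \in pairmap pk a s ->
  (src m \in a :: s) && (tgt m \in a :: s).
Proof.
elim: s a => //= y s IH a /andP[h p]; rewrite inE => /orP[/eqP->|].
  case/andP: (pk_ok h) => _; rewrite /Defs.joins !inE =>
    /orP[]/andP[/eqP-> /eqP->]; by rewrite !eqxx ?orbT.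
move/(IH _ p); rewrite !inE => /andP[-> ->]; by rewrite !orbT.
Qed.

Lemma pm_uniq a s : path (adj S) a s -> uniq (a :: s) -> uniq (pairmap pk a s).
Proof.
elim: s a => //= y s IH a /andP[h p] /andP[na u]; rewrite IH // andbT.
apply/negP => /(pm_mem p) /andP[hs ht].
case/andP: (pk_ok h) => _; rewrite /Defs.joins =>
  /orP[]/andP[/eqP e1 /eqP e2].
- by move: hs; rewrite e1 (negbTE na).
- by move: ht; rewrite e2 (negbTE na).
Qed.

Lemma pm_cross a s (c : pred V) : path (adj S) a s -> c a != c (last a s) ->
  has (cross c) (pairmap pk a s).
Proof.
elim: s a => /= [|y s IH] a; first by rewrite eqxx.
move=> /andP[h p] hc; case e: (c a == c y).
  by rewrite IH ?orbT // -(eqP e).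
case/andP: (pk_ok h) => _ j; by rewrite (joins_cross j) ?e.
Qed.

End Pick.

Lemma mk_cycle (S : {set L}) x p q : x \notin S -> joins x p q -> connect (adj S) q p ->
  exists ls, [/\ is_cycle src tgt (S :|: [set x]) (rcons ls x), all (mem S) ls &
     forall c : pred V, c p != c q -> has (cross c) ls].
Proof.
move=> xS jx /connectP[pth pp ep]; subst p.
move: jx; case: (shortenP pp) => p' pp' u _ jx {pp}.
exists (pairmap (pk S x) q p'); split.
- exists (q :: p'); split.
  + by case: (pairmap _ _ _).
  + by rewrite size_rcons size_pairmap.
  + rewrite u andbT rcons_uniq pm_uniq // andbT.
    by apply/negP => /(allP (pm_all x pp')) /=; rewrite (negbTE xS).
  + rewrite all_rcons /= !inE eqxx orbT /=.
    apply/allP => m /(allP (pm_all x pp')) /= mS; by rewrite inE mS.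
  + move=> i dl dv; rewrite size_rcons size_pairmap ltnS leq_eqVlt => /orP[/eqP ->|hi].
    * rewrite nth_rcons size_pairmap ltnn eqxx modnn /=.
      by rewrite (set_nth_default q) //= -last_nth.
    * rewrite nth_rcons size_pairmap hi modn_small //; exact: pm_nth.
- exact: pm_all.
- move=> c hc; apply: pm_cross => //; by rewrite eq_sym.
Qed.


Lemma joins_cross2 (c : pred V) m u w : joins m u w -> cross c m -> c u != c w.
Proof. rewrite /cross => /orP[]/andP[/eqP<- /eqP<-] //; by rewrite eq_sym. Qed.

Section Main.
Variables (T : {set L}) (l : L) (a b : V).
Hypotheses (Tsp : spanning_tree src tgt T) (lT : l \in T) (jl : joins l a b)
  (nab : ~~ connect (adj (T :\ l)) a b).
Let cA : pred V := fun z => connect (adj (T :\ l)) a z.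

Lemma closure y : y \in T -> y != l -> cA (src y) = cA (tgt y).
Proof.
move=> yT yl; have h : adj (T :\ l) (src y) (tgt y).
  by apply/existsP; exists y; rewrite !inE yl yT joins_self.
rewrite /cA; apply/idP/idP => hc.
  exact: connect_trans hc (connect1 h).
apply: connect_trans hc _; apply: connect1; by rewrite adj_sym.
Qed.

Lemma cover z : cA z || connect (adj (T :\ l)) b z.
Proof.
have := (Tsp.1 a z); move/connectP => [s ps ->].
have : cA a || connect (adj (T :\ l)) b a by rewrite /cA connect0.
elim: s a ps => //= y s IH x /andP[hxy ps] hx; apply: IH => //.
case/existsP: hxy => m /andP[mT jm].
case: (eqVneq m l) => [e|ml].
  subst m; move: jl jm; rewrite /Defs.joins /cA =>
    /orP[]/andP[/eqP e1 /eqP e2] /orP[]/andP[/eqP e3 /eqP e4];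
    by rewrite -?e4 -?e3 ?e1 ?e2 connect0 ?orbT.
have h : adj (T :\ l) x y by apply/existsP; exists m; rewrite !inE ml mT jm.
case/orP: hx => hx; apply/orP; [left|right]; exact: connect_trans hx (connect1 h).
Qed.

Lemma good li : cross cA li -> li != l ->
  [/\ li \notin T, on_loop src tgt T li l & spanning_tree src tgt ((T :\ l) :|: [set li])].
Proof.
move=> cli lil.
have liT : li \notin T.
  by apply/negP => liT; move: cli; rewrite /cross closure // eqxx.
have [u [w [ju cu cw]]] : exists u w, [/\ joins li u w, cA u & ~~ cA w].
  move: cli; rewrite /cross; case h: (cA (src li)) => /= h2.
    by exists (src li), (tgt li); rewrite joins_self h.
  by exists (tgt li), (src li); rewrite joins_sym joins_self h; move: h2; case: (cA (tgt li)).
have yl : forall y, y \in T -> cross cA y -> y = l.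
  move=> y yT; apply: contraTeq => yl; by rewrite /cross closure // eqxx.
split => //.
- have [ls [cyc allS hc]] := mk_cycle liT ju (Tsp.1 w u).
  exists (rcons ls li); split => //; first by rewrite mem_rcons inE eqxx.
  have /hasP[y yls cy] := hc cA ltac:(by rewrite cu (negbTE cw)).
  by rewrite mem_rcons inE -(yl y (allP allS y yls) cy) yls orbT.
- split.
  + have sub : T :\ l \subset (T :\ l) :|: [set li] by apply: subsetUl.
    have hz : forall z, connect (adj ((T :\ l) :|: [set li])) a z.
      have ab : connect (adj ((T :\ l) :|: [set li])) a b.
        apply: connect_trans (connect_subS sub cu) _.
        apply: connect_trans (connect1 (_ : adj _ u w)) _.
          by apply/existsP; exists li; rewrite !inE eqxx orbT ju.
        apply: (connect_subS sub); rewrite connect_symS.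
        by move: (cover w); rewrite (negbTE cw).
      move=> z; case/orP: (cover z) => hz; first exact: connect_subS sub hz.
      exact: connect_trans ab (connect_subS sub hz).
    move=> z1 z2; apply: connect_trans (hz z2); rewrite connect_symS; exact: hz.
  + move=> ls [vs [ne sz /andP[ul uv] al J]].
    case: (boolP (li \in ls)) => lils; last first.
      apply: (Tsp.2 ls); exists vs; split => //; try by rewrite ul uv.
      apply/allP => y yls; have := allP al y yls; rewrite !inE.
      case/orP => [/andP[_ ->] // | /eqP e].
      by rewrite -e yls in lils.
    set k := index li ls; have hk : k < size ls by rewrite index_mem.
    have := @cycle_class cA _ (fun i => nth a vs i) _ hk.
    have Jk := J k li a hk; rewrite nth_index // in Jk.
    move/(joins_cross2 Jk): cli => ne2.
    move=> H; move/negP: ne2; apply; apply/eqP; apply: H => i hi ik.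
    have yi : nth li ls i != li.
      by rewrite -{2}(nth_index li lils) nth_uniq.
    have := allP al _ (mem_nth li hi); rewrite !inE (negbTE yi) orbF => /andP[yl' yT].
    apply: joins_eq (J i li a hi) _; exact: closure.
Qed.

End Main.

End Aux.

Lemma card_sum (L' : finType) (P : pred L') : #|[set y | P y]| = \sum_y (P y : nat).
Proof.
rewrite -sum1_card big_mkcond /=; apply: eq_bigr => y _; rewrite inE; by case: (P y).
Qed.

Lemma cnt (V L : finType) (f : L -> V) (cA : pred V) :
  \sum_(v | cA v) #|[set y | f y == v]| = \sum_y (cA (f y) : nat).
Proof.
under eq_bigr do rewrite card_sum.
rewrite exchange_big /=; apply: eq_bigr => y _.
case h: (cA (f y)).
  rewrite (bigD1 (f y)) //= eqxx big1 // => v /andP[_ /negbTE]; by rewrite eq_sym => ->.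
apply: big1 => v hv; case: eqP => // e; by rewrite e hv in h.
Qed.

Theorem lemma7 (V L : finType) (src tgt : L -> V) (v1 v2 : V) :
  v1 != v2 ->
  one_PI src tgt ->
  (forall v : V, ~~ odd (incidence src tgt v1 v2 v)) ->
  forall T : {set L}, spanning_tree src tgt T ->
  forall l : L, (exists theta, is_path src tgt T v1 v2 theta /\ l \in theta) ->
  exists l1 l2 : L,
    [/\ l1 != l2, (l1 \notin T) && (l2 \notin T),
        on_loop src tgt T l1 l /\ on_loop src tgt T l2 l,
        spanning_tree src tgt ((T :\ l) :|: [set l1]) &
        spanning_tree src tgt ((T :\ l) :|: [set l2])].
Proof.
move=> v12 [_ pi1] hev T Tsp l [theta [[vs [sz [hd lt] uv allT J]] lin]].
set k := index l theta; have hk : k < size theta by rewrite index_mem.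
set a := nth v1 vs k; set b := nth v1 vs k.+1.
have jl : joins src tgt l a b by have := J k l hk; rewrite nth_index.
have lT : l \in T by exact: (allP allT).
have hsv : size vs = (size theta).+1 := sz.
have idx : forall j, j < size theta -> nth l theta j = l -> j = k.
  move=> j hj e; apply: (@joins_idx V L src tgt vs v1 l j k uv); try lia.
    by rewrite -{1}e; apply: J.
  exact: jl.
have step : forall j, j < size theta -> j != k ->
    adj src tgt (T :\ l) (nth v1 vs j) (nth v1 vs j.+1).
  move=> j hj jk; apply/existsP; exists (nth l theta j).
  rewrite !inE (allP allT _ (mem_nth l hj)) J // andbT andbT.
  by apply: contra jk => /eqP e; apply/eqP; apply: idx.
have h0 : nth v1 vs 0 = v1 by rewrite nth0.
have hn : nth v1 vs (size theta) = v2.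
  by rewrite -lt -nth_last hsv.
have pre : forall j, j <= k -> connect (adj src tgt (T :\ l)) v1 (nth v1 vs j).
  elim => [|j IH] hj; first by rewrite h0 connect0.
  apply: connect_trans (IH ltac:(lia)) (connect1 (step j _ _)); lia.
have suf : forall d, k.+1 + d <= size theta ->
    connect (adj src tgt (T :\ l)) b (nth v1 vs (k.+1 + d)).
  elim => [|d IH] hdd; first by rewrite addn0 connect0.
  rewrite addnS; apply: connect_trans (IH ltac:(lia)) (connect1 (step _ _ _)); lia.
have nab : ~~ connect (adj src tgt (T :\ l)) a b.
  apply/negP => hab.
  have lnT : l \notin T :\ l by rewrite !inE eqxx.
  have ba : connect (adj src tgt (T :\ l)) b a by rewrite connect_symS.
  have [ls [cyc _ _]] := mk_cycle lnT jl ba.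
  apply: (Tsp.2 (rcons ls l)); apply: is_cycle_sub cyc.
  by apply/subsetP => y; rewrite !inE => /orP[/andP[_ ->] | /eqP ->].
pose cA : pred V := fun z => connect (adj src tgt (T :\ l)) a z.
have v1A : cA v1 by rewrite /cA connect_symS; exact: pre.
have v2A : ~~ cA v2.
  apply: contra nab => h; apply: connect_trans h _.
  rewrite connect_symS -hn; have := suf (size theta - k.+1) ltac:(lia).
  by have -> : k.+1 + (size theta - k.+1) = size theta by lia.
pose C := [set y | cross src tgt cA y].
have lC : l \in C.
  rewrite inE; apply: (joins_cross jl); by rewrite /cA connect0 (negbTE nab).
have oddC : odd #|C|.
  have Hev : ~~ odd (\sum_(v | cA v) incidence src tgt v1 v2 v).
    apply: (big_ind (fun n => ~~ odd n)) => //.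
    by move=> x y hx hy; rewrite oddD (negbTE hx) (negbTE hy).
  rewrite /incidence !big_split /= !cnt in Hev.
  have e1 : \sum_(v | cA v) (v == v1 : nat) = 1.
    rewrite (bigD1 v1) //= eqxx big1 // => v /andP[_ /negbTE ->] //.
  have e2 : \sum_(v | cA v) (v == v2 : nat) = 0.
    apply: big1 => v hv; case: eqP => // e; by rewrite -e hv in v2A.
  rewrite e1 e2 addn0 -big_split /= oddD addbT negbK in Hev.
  rewrite card_sum; move: Hev.
  rewrite (big_morph odd oddD (erefl : odd 0 = false)).
  rewrite (big_morph odd oddD (erefl : odd 0 = false)).
  congr (is_true _); apply: eq_bigr => y _.
  by rewrite oddD /cross; case: (cA (src y)); case: (cA (tgt y)).
have [l' l'C l'l] : exists2 l', l' \in C & l' != l.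
  have [u [w [huw cu cw]]] := cross_step (pi1 l a b) (connect0 _ a) nab.
  case/existsP: huw => l' /andP[hl' j']; exists l'.
    by rewrite inE; apply: (joins_cross j'); move: cu cw; rewrite /cA => -> /negbTE ->.
  by move: hl'; rewrite !inE andbT.
have : 1 < #|C :\ l|.
  have hp : 0 < #|C :\ l| by apply/card_gt0P; exists l'; rewrite in_setD1 l'l l'C.
  move: oddC; rewrite (cardsD1 l) lC.
  by case: #|C :\ l| hp => [|[|n]].
case/card_gt1P => l1 [l2 [h1 h2 h12]].
move: h1 h2; rewrite !inE => /andP[h1l h1C] /andP[h2l h2C].
have [g1 g2 g3] := good Tsp jl h1C h1l.
have [g4 g5 g6] := good Tsp jl h2C h2l.
exists l1, l2; split => //; by rewrite g1 g4.
Qed.
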